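(* Let $G$ be a finite group and $H \le G$ a subgroup with $H \neq \{e\}$. Let $C_{\min}$ be a non-identity conjugacy class of $G$ of minimal size among the non-identity conjugacy classes that intersect $H$ non-trivially. Then \[ |H|^{-1}|C_{\min}|^{-1} < D_H \le (|H|-1)\,|C_{\min}|^{-1/2}. \]
   Context: For a finite group $G$, let $\mathrm{Irr}(G)$ be its set of complex irreducible characters and $d_\chi=\chi(e)$. For $H \le G$ let $D_H = \frac{1}{|G|}\sum_{\chi \in \mathrm{Irr}(G)} d_\chi \big|\sum_{h \in H, h \neq e}\chi(h)\big|$, the $L_1$ distance between the distributions $P_H(\chi)=\frac{d_\chi}{|G|}\sum_{h\in H}\chi(h)$ and $P_{\{e\}}$ on $\mathrm{Irr}(G)$. *)

(* Defs.v *)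
From mathcomp Require Import all_boot all_order all_algebra all_fingroup all_solvable all_field all_character.
Set Implicit Arguments. Unset Strict Implicit. Unset Printing Implicit Defensive.
Import GRing.Theory Num.Theory.
Local Open Scope ring_scope.

Definition DH (gT : finGroupType) (G H : {group gT}) : algC :=
  (#|G|%:R)^-1 * \sum_(i : Iirr G) 'chi[G]_i 1%g * `| \sum_(h in (H^#)%g) 'chi[G]_i h |.

(* Main.v *)
Require Import Defs.
From mathcomp Require Import all_boot all_order all_algebra all_fingroup all_solvable all_field all_character.
From mathcomp Require Import ring.
Import Order.TTheory GRing.Theory Num.Theory.
Local Open Scope ring_scope.

Lemma col_bound (gT : finGroupType) (G : {group gT}) (h : gT) : h \in G ->
  \sum_i 'chi[G]_i 1%g * `|'chi_i h| <= #|G|%:R / sqrtC (#|(h ^: G)%g|%:R).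
Proof.
move=> Gh.
set c : algC := #|(h ^: G)%g|%:R.
have cpos : 0 < c by rewrite ltr0n; apply/card_gt0P; exists h; apply: class_refl.
set s := sqrtC c.
have spos : 0 < s by rewrite sqrtC_gt0.
have s2 : s ^+ 2 = c by rewrite sqrtCK.
have key : forall i : Iirr G, 2%:R * s * ('chi_i 1%g * `|'chi_i h|) <=
    ('chi_i 1%g) ^+ 2 + c * `|'chi_i h| ^+ 2.
  move=> i.
  set d := 'chi_i 1%g; set a := `|'chi_i h|.
  have dR : d \is Num.real by apply: gtr0_real; apply: irr1_gt0.
  have aR : a \is Num.real by apply: normr_real.
  have sR : s \is Num.real by apply: gtr0_real.
  have e : d ^+ 2 + c * a ^+ 2 - 2%:R * s * (d * a) = (d - s * a) ^+ 2.
    by rewrite -s2; ring.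
  rewrite -subr_ge0 e -real_normK ?exprn_ge0 //.
  by apply: rpredB => //; apply: rpredM.
have sumA : \sum_i `|'chi[G]_i h| ^+ 2 = #|('C_G[h])%g|%:R.
  have := second_orthogonality_relation h Gh; rewrite class_refl mulr1n => <-.
  by apply: eq_bigr => i _; rewrite normCK.
have cC : c * #|('C_G[h])%g|%:R = #|G|%:R.
  by rewrite /c -index_cent1 -natrM mulnC Lagrange // subsetIl.
have H2 : 2%:R * s * (\sum_i 'chi[G]_i 1%g * `|'chi_i h|) <= 2%:R * #|G|%:R.
  rewrite mulr_sumr.
  apply: le_trans (ler_sum _ (fun i _ => key i)) _.
 rewrite big_split /= irr_sum_square -mulr_sumr sumA cC.
  have -> : (2 : algC) * #|G|%:R = #|G|%:R + #|G|%:R by ring.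
  by [].
rewrite (ler_pdivlMr _ _ spos) mulrC.
rewrite -mulrA in H2.
by rewrite -(ler_pM2l (_ : (0:algC) < 2%:R)) ?ltr0n.
Qed.

Lemma lower_part (gT : finGroupType) (G H : {group gT}) (g : gT) :
  H \subset G -> g \in (H^#)%g ->
  #|('C_G[g])%g|%:R <= \sum_i 'chi[G]_i 1%g * `|\sum_(h in (H^#)%g) 'chi[G]_i h|.
Proof.
move=> sHG Hg.
have Gg : g \in G by apply: (subsetP sHG); move: Hg; rewrite !inE => /andP[].
have Hsub : forall h, h \in (H^#)%g -> h \in G.
  by move=> h; rewrite !inE => /andP[_ /(subsetP sHG)].
apply: le_trans (_ : _ <= \sum_i `|('chi[G]_i g)^* * \sum_(h in (H^#)%g) 'chi[G]_i h|) _; last first.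
  apply: ler_sum => i _; rewrite normrM norm_conjC.
  by apply: ler_wpM2r => //; apply: char1_ge_norm; apply: irr_char.
apply: le_trans (ler_norm_sum _ _ _).
have -> : \sum_i ('chi[G]_i g)^* * \sum_(h in (H^#)%g) 'chi[G]_i h =
    \sum_(h in (H^#)%g) #|('C_G[h])%g|%:R *+ (h \in (g ^: G)%g).
  under eq_bigr do rewrite mulr_sumr.
  rewrite exchange_big /=; apply: eq_bigr => h Hh.
  rewrite -second_orthogonality_relation //.
  by apply: eq_bigr => i _; rewrite mulrC.
rewrite ger0_norm; last by apply: sumr_ge0 => h _; apply: mulrn_wge0.
rewrite (bigD1 g) //= class_refl mulr1n lerDl.
by apply: sumr_ge0 => h _; apply: mulrn_wge0.
Qed.

Theorem corollary1 (gT : finGroupType) (G H : {group gT}) (Cmin : {set gT}) :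
  H \subset G -> H :!=: 1%g ->
  Cmin \in classes G -> Cmin != 1%g -> Cmin :&: H != set0 ->
  (forall C : {set gT}, C \in classes G -> C != 1%g -> C :&: H != set0 ->
     (#|Cmin| <= #|C|)%N) ->
  (#|H|%:R)^-1 * (#|Cmin|%:R)^-1 < DH G H /\
  DH G H <= (#|H|%:R - 1) * (sqrtC (#|Cmin|%:R))^-1.
Proof.
move=> sHG ntH CminG ntC /set0Pn[g] /setIP[gC Hg] minC.
have /imsetP[x Gx defC] := CminG.
have Gg : g \in G by apply: (subsetP sHG).
have defCg : Cmin = (g ^: G)%g by rewrite defC; apply/esym/class_eqP; rewrite -defC.
have ng1 : g != 1%g.
  by apply: contraNneq ntC => g1; rewrite defCg g1 class1G.
have Hsg : g \in (H^#)%g by rewrite !inE ng1.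
have Gpos : (0 : algC) < #|G|%:R by rewrite ltr0n cardG_gt0.
have cmin_pos : (0 : algC) < #|Cmin|%:R.
  by rewrite ltr0n; apply/card_gt0P; exists g.
have cardC : #|('C_G[g])%g|%:R * #|Cmin|%:R = #|G|%:R :> algC.
  by rewrite defCg -index_cent1 -natrM Lagrange // subsetIl.
split.
  have low : (#|Cmin|%:R)^-1 <= DH G H.
    rewrite /DH ler_pdivlMl // -cardC.
rewrite mulfK ?gt_eqF //.
    exact: lower_part.
  apply: lt_le_trans low.
  rewrite gtr_pMl ?invr_gt0 // invf_lt1 ?ltr0n ?cardG_gt0 //.
  by rewrite ltr1n cardG_gt1.
rewrite /DH ler_pdivrMl //.
apply: le_trans (_ : _ <= \sum_i 'chi[G]_i 1%g * \sum_(h in (H^#)%g) `|'chi[G]_i h|) _.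
  by apply: ler_sum => i _; apply: ler_wpM2l; [apply: ltW; apply: irr1_gt0 | apply: ler_norm_sum].
under eq_bigr do rewrite mulr_sumr.
rewrite exchange_big /=.
apply: le_trans (_ : _ <= \sum_(h in (H^#)%g) #|G|%:R / sqrtC (#|Cmin|%:R)) _.
  apply: ler_sum => h Hh.
  have Gh : h \in G by move: Hh; rewrite !inE => /andP[_ /(subsetP sHG)].
  apply: (@le_trans _ _ (#|G|%:R / sqrtC #|(h ^: G)%g|%:R)); first exact: col_bound.
  rewrite ler_pM2l // lef_pV2 ?posrE ?sqrtC_gt0 ?ltr0n ?cardG_gt0 //; last first.
    by apply/card_gt0P; exists g.
    by apply/card_gt0P; exists h; apply: class_refl.
  rewrite ler_sqrtC ?nnegrE ?ler0n // ler_nat.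
  apply: minC; first exact: mem_classes.
    rewrite classG_eq1; move: Hh; by rewrite !inE => /andP[].
  by apply/set0Pn; exists h; rewrite inE class_refl; move: Hh; rewrite !inE => /andP[].
rewrite sumr_const (cardsD1 1%g H) group1 natrD /= [1 + _]addrC addrK.
rewrite [X in _ <= X]mulrCA mulr_natl.
by rewrite [X in _ <= X]mulr_natl.
Qed.
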